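(* For integers $2\le n\le m$, $$\gamma^{LD}(K_n\times K_m)=\begin{cases} m-1, & 2n\le m \text{ and } (n,m)\ne(2,4),\\ \left\lceil \frac{2n+2m-1}{3}\right\rceil-1, & 2<n\le m<2n \text{ and } (n,m)\ne(4,4),\\ m, & n=2,\ m\le 4,\\ 5, & n=m=4.\end{cases}$$
   Context: $K_q$ is the complete graph on vertex set $\{1,\dots,q\}$. The direct product $G_1\times G_2$ has vertex set $V_1\times V_2$, with $(u_1,u_2)$ adjacent to $(v_1,v_2)$ iff $u_1v_1\in E_1$ and $u_2v_2\in E_2$. For a code (nonempty vertex subset) $C$ and vertex $v$, $I(C;v)=N[v]\cap C$, where $N[v]$ is the closed neighbourhood. A code $C$ is locating-dominating if for all distinct non-codewords $u,v$, $I(C;u)\ne\emptyset$ and $I(C;u)\ne I(C;v)$. $\gamma^{LD}(G)$ is the minimum size of a locating-dominating code in $G$. *)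

(* Defs.v *)
From mathcomp Require Import all_boot.
Set Implicit Arguments. Unset Strict Implicit. Unset Printing Implicit Defensive.

Definition closed_nbhd (T : finType) (adj : rel T) (v : T) : {set T} :=
  [set u | (u == v) || adj v u].

Definition Iset (T : finType) (adj : rel T) (C : {set T}) (v : T) : {set T} :=
  closed_nbhd adj v :&: C.

Definition locating_dominating (T : finType) (adj : rel T) (C : {set T}) : bool :=
  [&& C != set0,
      [forall u, (u \notin C) ==> (Iset adj C u != set0)] &
      [forall u, forall v, [&& u \notin C, v \notin C & u != v] ==>
                             (Iset adj C u != Iset adj C v)]].

(* gamma^LD(G): minimum size of a locating-dominating code
   (the default #|T| is never the strict minimizer issue: setT is LD when T nonempty). *)
Definition gammaLD (T : finType) (adj : rel T) : nat :=
  \big[minn/#|T|]_(C : {set T} | locating_dominating adj C) #|C|.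

Definition K_adj (q : nat) : rel 'I_q := fun i j => i != j.

Definition direct_prod_adj (T1 T2 : finType) (a1 : rel T1) (a2 : rel T2) : rel (T1 * T2) :=
  fun x y => a1 x.1 y.1 && a2 x.2 y.2.

Definition KxK (n m : nat) : rel ('I_n * 'I_m) :=
  direct_prod_adj (@K_adj n) (@K_adj m).
Arguments KxK : clear implicits.

(* Main.v *)
Require Import Defs.
From mathcomp Require Import all_boot.
From mathcomp Require Import zify.
Set Implicit Arguments. Unset Strict Implicit. Unset Printing Implicit Defensive.

Section Basic.
Variables n m : nat.
Local Notation T := ('I_n * 'I_m)%type.
Implicit Types C : {set T}.

Lemma IsetE C v : v \notin C ->
  Iset (KxK n m) C v = [set x in C | (x.1 != v.1) && (x.2 != v.2)].
Proof.
move=> hv; apply/setP=> x; rewrite !inE /KxK /direct_prod_adj /K_adj /=.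
case: (eqVneq x v) => [->|_]; first by rewrite (negbTE hv) andbF.
by rewrite /= andbC [v.1 == _]eq_sym [v.2 == _]eq_sym.
Qed.

Definition row_empty C r := forall c, (r, c) \notin C.
Definition col_empty C c := forall r, (r, c) \notin C.
Definition isolated C x := x \in C /\ forall y, y \in C -> (y.1 = x.1 \/ y.2 = x.2) -> y = x.

Lemma suffLD C : 0 < n -> 0 < m ->
  (forall r r', row_empty C r -> row_empty C r' -> r = r') ->
  (forall c c', col_empty C c -> col_empty C c' -> c = c') ->
  (forall x y, isolated C x -> isolated C y -> x = y) ->
  (forall x r c, isolated C x -> row_empty C r -> col_empty C c -> False) ->
  (forall r c, (r, c) \notin C -> exists2 z, z \in C & (z.1 != r) && (z.2 != c)) ->
  locating_dominating (KxK n m) C.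
Proof.
move=> n0 m0 ha1 ha2 hb hc hd; apply/and3P; split.
- apply/set0Pn; set r0 := Ordinal n0; set c0 := Ordinal m0.
  case: (boolP ((r0, c0) \in C)) => h; first by exists (r0, c0).
  by case: (hd _ _ h) => z zC _; exists z.
- apply/forallP => -[r c]; apply/implyP => hu; rewrite IsetE //.
  case: (hd _ _ hu) => z zC hz; apply/set0Pn; exists z; by rewrite inE zC.
apply/forallP => -[a b]; apply/forallP => -[c d]; apply/implyP => /and3P [hu hv huv].
rewrite !IsetE //; apply/negP => /eqP E.
have key : forall x, x \in C -> ((x.1 != a) && (x.2 != b)) = ((x.1 != c) && (x.2 != d)).
  by move=> x xC; move/setP: E => /(_ x); rewrite !inE xC.
case: (eqVneq a c) => [eac|nac].
  subst c; have nbd : b != d by apply: contraNneq huv => ->.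
  suff [cb cd] : col_empty C b /\ col_empty C d by move: nbd; rewrite (ha2 _ _ cb cd) eqxx.
  split=> r; apply/negP => hr; move: (key _ hr) => /=.
    case: (eqVneq r a) => [era|nra]; first by subst r; rewrite hr in hu.
    by rewrite eqxx (negbTE nbd).
  case: (eqVneq r a) => [era|nra]; first by subst r; rewrite hr in hv.
  by rewrite eqxx [d == b]eq_sym (negbTE nbd).
case: (eqVneq b d) => [ebd|nbd].
  subst d.
  suff [cb cd] : row_empty C a /\ row_empty C c by move: nac; rewrite (ha1 _ _ cb cd) eqxx.
  split=> r; apply/negP => hr; move: (key _ hr) => /=.
    case: (eqVneq r b) => [era|nra]; first by subst r; rewrite hr in hu.
    by rewrite eqxx (negbTE nac).
  case: (eqVneq r b) => [era|nra]; first by subst r; rewrite hr in hv.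
  by rewrite eqxx [c == a]eq_sym (negbTE nac).
have c1 : forall y, y \in C -> y.1 = a -> y = (a, d).
  move=> [y1 y2] yC /= e1; subst y1; move: (key _ yC) => /=; rewrite eqxx nac /=.
  by case: (eqVneq y2 d) => // ->.
have c2 : forall y, y \in C -> y.2 = b -> y = (c, b).
  move=> [y1 y2] yC /= e1; subst y2; move: (key _ yC) => /=; rewrite eqxx (negbTE nbd) /= andbF andbT.
  by case: (eqVneq y1 c) => // ->.
have c3 : forall y, y \in C -> y.1 = c -> y = (c, b).
  move=> [y1 y2] yC /= e1; subst y1; move: (key _ yC) => /=; rewrite eqxx eq_sym nac /=.
  by case: (eqVneq y2 b) => // ->.
have c4 : forall y, y \in C -> y.2 = d -> y = (a, d).
  move=> [y1 y2] yC /= e1; subst y2; move: (key _ yC) => /=; rewrite eqxx [d == b]eq_sym (negbTE nbd) /= andbF andbT.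
  by case: (eqVneq y1 a) => // ->.
have iad : (a, d) \in C -> isolated C (a, d).
  by move=> h; split=> // y yC [] /=; [apply: c1|apply: c4].
have icb : (c, b) \in C -> isolated C (c, b).
  by move=> h; split=> // y yC [] /=; [apply: c3|apply: c2].
have ra : (a, d) \notin C -> row_empty C a.
  by move=> h z; apply: contra h => hz; rewrite -(c1 _ hz).
have rc : (c, b) \notin C -> row_empty C c.
  by move=> h z; apply: contra h => hz; rewrite -(c3 _ hz).
have cb : (c, b) \notin C -> col_empty C b.
  by move=> h z; apply: contra h => hz; rewrite -(c2 _ hz).
have cd : (a, d) \notin C -> col_empty C d.
  by move=> h z; apply: contra h => hz; rewrite -(c4 _ hz).
case: (boolP ((a, d) \in C)) => h1; case: (boolP ((c, b) \in C)) => h2.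
- by move: (hb _ _ (iad h1) (icb h2)) => [e _]; rewrite e eqxx in nac.
- exact: (hc _ _ _ (iad h1) (rc h2) (cb h2)).
- exact: (hc _ _ _ (icb h2) (ra h1) (cd h1)).
- by move: nac; rewrite (ha1 _ _ (ra h1) (rc h2)) eqxx.
Qed.

Section Nec.
Variable C : {set T}.
Hypothesis LD : locating_dominating (KxK n m) C.

Lemma ld_neq u v : u \notin C -> v \notin C -> u != v ->
  [set x in C | (x.1 != u.1) && (x.2 != u.2)] != [set x in C | (x.1 != v.1) && (x.2 != v.2)].
Proof.
move: LD => /and3P [_ _ /forallP h] hu hv huv.
move: (h u) => /forallP /(_ v) /implyP; rewrite hu hv huv => /(_ isT).
by rewrite !IsetE.
Qed.

Lemma nec_d r c : (r, c) \notin C -> exists2 z, z \in C & (z.1 != r) && (z.2 != c).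
Proof.
move: LD => /and3P [_ /forallP h _] hu.
move: (h (r, c)) => /implyP /(_ hu); rewrite IsetE // => /set0Pn [z].
by rewrite inE => /andP [zC hz]; exists z.
Qed.

Lemma nec_cols c c' : 0 < n -> col_empty C c -> col_empty C c' -> c = c'.
Proof.
move=> n0 hc hc'; apply/eqP; apply/negPn/negP => ncc.
set r0 := Ordinal n0.
have := ld_neq (hc r0) (hc' r0); rewrite xpair_eqE eqxx /= ?andbT (negbTE ncc) => /(_ isT) /negP; apply.
apply/eqP/setP => -[x1 x2]; rewrite !inE /=.
case: (boolP ((x1, x2) \in C)) => //= xC.
have -> : x2 != c by apply: contraNneq (hc x1) => <-.
by have -> : x2 != c' by apply: contraNneq (hc' x1) => <-.
Qed.

Lemma nec_rows r r' : 0 < m -> row_empty C r -> row_empty C r' -> r = r'.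
Proof.
move=> m0 hc hc'; apply/eqP; apply/negPn/negP => ncc.
set c0 := Ordinal m0.
have := ld_neq (hc c0) (hc' c0); rewrite xpair_eqE eqxx /= ?andbT (negbTE ncc) => /(_ isT) /negP; apply.
apply/eqP/setP => -[x1 x2]; rewrite !inE /=.
case: (boolP ((x1, x2) \in C)) => //= xC.
have -> : x1 != r by apply: contraNneq (hc x2) => <-.
by have -> : x1 != r' by apply: contraNneq (hc' x2) => <-.
Qed.

Lemma nec_b x y : isolated C x -> isolated C y -> x = y.
Proof.
move=> [xC hx] [yC hy]; apply/eqP; apply/negPn/negP => nxy.
have n1 : x.1 != y.1.
  by apply: contra nxy => /eqP e; rewrite (hy _ xC (or_introl e)).
have n2 : x.2 != y.2.
  by apply: contra nxy => /eqP e; rewrite (hy _ xC (or_intror e)).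
have hu : (x.1, y.2) \notin C.
  apply/negP => h; have := hx _ h (or_introl erefl) => e.
  by move: n2; rewrite -e eqxx.
have hv : (y.1, x.2) \notin C.
  apply/negP => h; have := hx _ h (or_intror erefl) => e.
  by move: n1; rewrite -e eqxx.
have := ld_neq hu hv; rewrite xpair_eqE /= (negbTE n1) => /(_ isT) /negP; apply.
apply/eqP/setP => z; rewrite !inE /=.
case: (boolP (z \in C)) => //= zC.
case: (eqVneq z x) => [->|zx]; first by rewrite eqxx /= eqxx andbF.
case: (eqVneq z y) => [->|zy]; first by rewrite eqxx /= eqxx andbF.
have a1 : z.1 != x.1 by apply: contra zx => /eqP e; rewrite (hx _ zC (or_introl e)).
have a2 : z.2 != x.2 by apply: contra zx => /eqP e; rewrite (hx _ zC (or_intror e)).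
have a3 : z.1 != y.1 by apply: contra zy => /eqP e; rewrite (hy _ zC (or_introl e)).
have a4 : z.2 != y.2 by apply: contra zy => /eqP e; rewrite (hy _ zC (or_intror e)).
by rewrite a1 a2 a3 a4.
Qed.

Lemma nec_c x r c : isolated C x -> row_empty C r -> col_empty C c -> False.
Proof.
move=> [xC hx] hr hc.
have n1 : x.1 != r by apply: contraTneq xC => e; rewrite [x]surjective_pairing e hr.
have n2 : x.2 != c by apply: contraTneq xC => e; rewrite [x]surjective_pairing e hc.
have := ld_neq (hc x.1) (hr x.2); rewrite xpair_eqE /= (negbTE n1) => /(_ isT) /negP; apply.
apply/eqP/setP => -[z1 z2]; rewrite !inE /=.
case: (boolP ((z1, z2) \in C)) => //= zC.
have -> : z2 != c by apply: contraNneq (hc z1) => <-.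
have -> : z1 != r by apply: contraNneq (hr z2) => <-.
rewrite andbT.
case: (eqVneq (z1, z2) x) => [<-|zx]; first by rewrite !eqxx.
have a1 : z1 != x.1 by apply: contra zx => /eqP e; rewrite (hx _ zC (or_introl e)).
have a2 : z2 != x.2 by apply: contra zx => /eqP e; rewrite (hx _ zC (or_intror e)).
by rewrite a1 a2.
Qed.

End Nec.
End Basic.

Section Count.
Variables (T I : finType) (f : T -> I) (C : {set T}).
Definition deg i := #|[set x in C | f x == i]|.

Lemma card_setE (P : pred I) : #|[set i | P i]| = \sum_i (P i : nat).
Proof. by rewrite -sum1_card big_mkcond /=; apply: eq_bigr => i _; rewrite inE; case: (P i). Qed.

Lemma sum_deg : \sum_i deg i = #|C|.
Proof.
rewrite -sum1_card (partition_big f predT) //=; apply: eq_bigr => i _.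
by rewrite /deg -sum1_card; apply: eq_bigl => x; rewrite inE.
Qed.

Lemma deg_ineq1 : 2 * #|[set i | deg i != 0]| <= #|C| + #|[set i | deg i == 1]|.
Proof.
rewrite !card_setE -sum_deg big_distrr -big_split /=; apply: leq_sum => i _.
by case: (deg i) => [|[|d]].
Qed.

Lemma deg_ineq2 : #|[set i | deg i != 0]| + #|[set i | 1 < deg i]| <= #|C|.
Proof.
rewrite !card_setE -sum_deg -big_split /=; apply: leq_sum => i _.
by case: (deg i) => [|[|d]].
Qed.

Lemma deg_le1 : (forall i, deg i <= 1) -> #|C| = #|[set i | deg i != 0]|.
Proof.
move=> h; rewrite card_setE -sum_deg; apply: eq_bigr => i _.
by move: (h i); case: (deg i) => [|[|d]].
Qed.

Lemma deg_compl : #|[set i | deg i != 0]| + #|[set i | deg i == 0]| = #|I|.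
Proof.
rewrite -(cardsC [set i | deg i != 0]); congr (_ + _); apply: eq_card => i.
by rewrite !inE negbK.
Qed.

Lemma deg1_card : #|[set i | deg i == 1]| = #|[set x in C | deg (f x) == 1]|.
Proof.
have -> : [set i | deg i == 1] = f @: [set x in C | deg (f x) == 1].
  apply/setP => i; rewrite inE /deg; apply/idP/imsetP.
  - move=> /cards1P [x hx]; exists x => //.
      have : x \in [set x in C | f x == i] by rewrite hx set11.
      by rewrite !inE => /andP [-> /eqP ->]; rewrite /deg hx cards1.
    have : x \in [set x in C | f x == i] by rewrite hx set11.
    by rewrite inE => /andP [_ /eqP ->].
  - by move=> [x]; rewrite inE => /andP [_ h] ->.
apply: card_in_imset => x y; rewrite !inE => /andP [xC hx] /andP [yC hy] exy.
move: hx; rewrite /deg => /cards1P [z hz].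
have : x \in [set x0 in C | f x0 == f x] by rewrite inE xC eqxx.
have : y \in [set x0 in C | f x0 == f x] by rewrite inE yC exy eqxx.
by rewrite hz !inE => /eqP -> /eqP ->.
Qed.

Lemma deg0_empty i x : deg i = 0 -> x \in C -> f x != i.
Proof.
move=> /eqP; rewrite cards_eq0 => /eqP h xC; apply/negP => /eqP e.
have : x \in [set x in C | f x == i] by rewrite inE xC e eqxx.
by rewrite h inE.
Qed.

Lemma deg_mem x : x \in C -> x \in [set y in C | f y == f x].
Proof. by move=> xC; rewrite inE xC eqxx. Qed.

End Count.

Ltac abs_cards := (repeat match goal with H : context [card.body _] |- _ => revert H end);
  repeat match goal with
 | |- context [@card.body ?T ?A] => let k := fresh "k" in set k := @card.body T A; clearbody k
 end; intros.

Section LB.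
Variables n m : nat.
Local Notation T := ('I_n * 'I_m)%type.
Variable C : {set T}.
Hypothesis n0 : 0 < n.
Hypothesis m0 : 0 < m.
Hypothesis LD : locating_dominating (KxK n m) C.



Local Notation R := (deg (fun x : T => x.1) C).
Local Notation Cd := (deg (fun x : T => x.2) C).

Lemma zr_le1 : #|[set i | R i == 0]| <= 1.
Proof.
apply/card_le1_eqP => i j; rewrite !inE => /eqP hi /eqP hj.
apply: (nec_rows LD m0) => c; apply/negP => h;
  first [have := deg0_empty hi h; by rewrite /= eqxx | have := deg0_empty hj h; by rewrite /= eqxx].
Qed.

Lemma zc_le1 : #|[set i | Cd i == 0]| <= 1.
Proof.
apply/card_le1_eqP => i j; rewrite !inE => /eqP hi /eqP hj.
apply: (nec_cols LD n0) => c; apply/negP => h;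
  first [have := deg0_empty hi h; by rewrite /= eqxx | have := deg0_empty hj h; by rewrite /= eqxx].
Qed.

Lemma lb_m1 : m - 1 <= #|C|.
Proof.
have h1 := deg_ineq2 (fun x : T => x.2) C.
have h2 := deg_compl (fun x : T => x.2) C.
have h3 := zc_le1.
rewrite card_ord in h2. move: h1 h2 h3. set a := #|[set i | Cd i != 0]|. set b := #|[set i | Cd i == 0]|. set k := #|C|. clearbody a b k. move=> h1 h2 h3. abs_cards; lia.
Qed.

Let A := [set x in C | R x.1 == 1].
Let B := [set x in C | Cd x.2 == 1].

Lemma AB_iso x : x \in A :&: B -> isolated C x.
Proof.
rewrite !inE => /andP [/andP [xC h1] /andP [_ h2]]; split => // y yC [] e.
  move: h1 => /cards1P [z hz].
  have : x \in [set y in C | y.1 == x.1] by rewrite inE xC eqxx.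
  have : y \in [set y in C | y.1 == x.1] by rewrite inE yC e eqxx.
  by rewrite hz !inE => /eqP -> /eqP ->.
move: h2 => /cards1P [z hz].
have : x \in [set y in C | y.2 == x.2] by rewrite inE xC eqxx.
have : y \in [set y in C | y.2 == x.2] by rewrite inE yC e eqxx.
by rewrite hz !inE => /eqP -> /eqP ->.
Qed.

Lemma e_le1 : #|A :&: B| <= 1.
Proof.
apply/card_le1_eqP => x y hx hy.
exact: (nec_b LD (AB_iso hy) (AB_iso hx)).
Qed.

Lemma e_c : 0 < #|A :&: B| -> 0 < #|[set i | R i == 0]| -> 0 < #|[set i | Cd i == 0]| -> False.
Proof.
move=> /card_gt0P [x hx] /card_gt0P [r hr] /card_gt0P [c hc].
move: hr hc; rewrite !inE => /eqP hr /eqP hc.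
have hre : row_empty C r by move=> z; apply/negP => h; have := deg0_empty hr h; rewrite /= eqxx.
have hce : col_empty C c by move=> z; apply/negP => h; have := deg0_empty hc h; rewrite /= eqxx.
have := nec_c LD (AB_iso hx); apply; [exact: hre | exact: hce].
Qed.

Lemma facts :
  [/\ 2 * #|[set i | R i != 0]| <= #|C| + #|A|,
      2 * #|[set i | Cd i != 0]| <= #|C| + #|B|,
      #|[set i | R i != 0]| + #|[set i | R i == 0]| = n,
      #|[set i | Cd i != 0]| + #|[set i | Cd i == 0]| = m &
      #|A :|: B| + #|A :&: B| = #|A| + #|B| /\ #|A :|: B| <= #|C|].
Proof.
split.
- by rewrite /A -deg1_card deg_ineq1.
- by rewrite /B -deg1_card deg_ineq1.
- by rewrite deg_compl card_ord.
- by rewrite deg_compl card_ord.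
split; first exact: cardsUI.
by apply: subset_leq_card; apply/subsetP => x; rewrite !inE => /orP [] /andP [].
Qed.

Lemma lb_main : 2 * n + 2 * m <= 3 * #|C| + 4.
Proof.
have [h1 h2 h3 h4 [h5 h6]] := facts.
have h7 := zr_le1; have h8 := zc_le1; have h9 := e_le1; have h10 := e_c.
have hn : ~ (0 < #|A :&: B| /\ 0 < #|[set i | R i == 0]| /\ 0 < #|[set i | Cd i == 0]|).
  by case => ? [] *; apply: h10.
move: h1 h2 h3 h4 h5 h6 h7 h8 h9 hn; abs_cards; lia.
Qed.

Lemma lb44 : n = 4 -> m = 4 -> #|C| <= 4 -> False.
Proof.
move=> en em hk.
have [h1 h2 h3 h4 [h5 h6]] := facts.
have h7 := zr_le1; have h8 := zc_le1; have h9 := e_le1; have h10 := e_c.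
have hn : ~ (0 < #|A :&: B| /\ 0 < #|[set i | R i == 0]| /\ 0 < #|[set i | Cd i == 0]|).
  by case => ? [] *; apply: h10.
have hr : exists r, 1 < R r.
  case: (boolP [exists r, 1 < R r]) => [/existsP //|/existsPn hh].
  have : #|C| = #|[set i | R i != 0]| by apply: deg_le1 => i; rewrite leqNgt hh.
  abs_cards; lia.
have hc : exists c, 1 < Cd c.
  case: (boolP [exists r, 1 < Cd r]) => [/existsP //|/existsPn hh].
  have : #|C| = #|[set i | Cd i != 0]| by apply: deg_le1 => i; rewrite leqNgt hh.
  abs_cards; lia.
case: hr => r hr; case: hc => c hc.
case: (boolP ((r, c) \in C)) => hrc.
  have := cardsD1 (r, c) C; rewrite hrc add1n => hD.
  have : #|A :|: B| <= #|C :\ (r, c)|.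
    apply: subset_leq_card; apply/subsetP => x; rewrite !inE.
    case: (eqVneq x (r, c)) => [->|_] /=.
      by rewrite (gtn_eqF hr) (gtn_eqF hc) andbF.
    by case/orP => /andP [].
  abs_cards; lia.
case: (nec_d LD hrc) => z zC /andP [z1 z2].
pose S := [set x in C | x.1 == r] :|: [set x in C | x.2 == c].
have hS : #|S| = R r + Cd c.
  rewrite cardsU; have -> : [set x in C | x.1 == r] :&: [set x in C | x.2 == c] = set0.
    apply/setP => -[x1 x2]; rewrite !inE /=; apply/negP => /andP [/andP [xC /eqP e1] /andP [_ /eqP e2]].
    by move: hrc; rewrite -e1 -e2 xC.
  by rewrite cards0 subn0.
have : #|z |: S| <= #|C|.
  apply: subset_leq_card; apply/subsetP => x; rewrite !inE.
  by case/orP => [/eqP ->|/orP [] /andP []].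
rewrite cardsU1 hS; have -> : z \notin S by rewrite !inE (negbTE z1) (negbTE z2) !andbF.
abs_cards; lia.
Qed.

End LB.

Lemma ord2_other (a b c : 'I_2) : a != b -> c != b -> c = a.
Proof.
move: a b c => [[|[|a]] ha] [[|[|b]] hb] [[|[|c]] hc] //= _ _; by apply: val_inj.
Qed.

Lemma lbn2 m (C : {set 'I_2 * 'I_m}) : 0 < m -> locating_dominating (KxK 2 m) C ->
  #|C| < m -> #|C| < 4 -> False.
Proof.
move=> m0 LD hkm hk4.
have h1 := deg_ineq2 (fun x : 'I_2 * 'I_m => x.2) C.
have h2 := deg_compl (fun x : 'I_2 * 'I_m => x.2) C.
have h3 := @zc_le1 2 m C isT LD.
rewrite card_ord in h2.
have /card_gt0P [s] : 0 < #|[set i | deg (fun x : 'I_2 * 'I_m => x.2) C i == 0]| by abs_cards; lia.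
rewrite inE => /eqP hs.
have hse : col_empty C s by move=> r; apply/negP => h; have := deg0_empty hs h; rewrite /= eqxx.
have hle : forall j, deg (fun x : 'I_2 * 'I_m => x.2) C j <= 1.
  move=> j; rewrite leqNgt; apply/negP => hj.
  have : 0 < #|[set i | 1 < deg (fun x : 'I_2 * 'I_m => x.2) C i]|.
    by apply/card_gt0P; exists j; rewrite inE.
  abs_cards; lia.
have two : forall r r' : 'I_2, r != r' -> 1 < deg (fun x : 'I_2 * 'I_m => x.1) C r.
  move=> r r' nr.
  case: (nec_d LD (hse r')) => z zC /andP [z1 _].
  have ez : z.1 = r by apply: ord2_other z1.
  have hr' : (r', z.2) \notin C.
    apply/negP => h; move: (hle z.2); rewrite leqNgt => /negP; apply.
    apply/card_gt1P; exists z, (r', z.2); rewrite !inE zC h eqxx /=; split => //.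
    by apply/negP => /eqP e; move: nr; rewrite -ez e /= eqxx.
  case: (nec_d LD hr') => w wC /andP [w1 w2].
  have ew : w.1 = r by apply: ord2_other w1.
  apply/card_gt1P; exists z, w; rewrite !inE zC wC ez ew eqxx; split => //.
  by apply: contraNneq w2 => ->.
have := sum_deg (fun x : 'I_2 * 'I_m => x.1) C.
rewrite big_ord_recl big_ord1.
have -> : lift ord0 ord0 = ord_max :> 'I_2 by apply: val_inj.
have := two ord0 ord_max isT; have := two ord_max ord0 isT.
abs_cards; lia.
Qed.

Lemma bigmin_le (I : eqType) (r : seq I) (P : pred I) (F : I -> nat) x i0 :
  i0 \in r -> P i0 -> \big[minn/x]_(i <- r | P i) F i <= F i0.
Proof.
elim: r => // a r IH; rewrite inE big_cons => /orP [/eqP <- -> |h Pi]; first exact: geq_minl.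
case: (P a); last exact: IH.
by apply: leq_trans (geq_minr _ _) (IH h Pi).
Qed.

Lemma gammaLD_eq (T : finType) (adj : rel T) k :
  (exists C, locating_dominating adj C /\ #|C| = k) ->
  (forall C, locating_dominating adj C -> k <= #|C|) -> k <= #|T| ->
  gammaLD adj = k.
Proof.
move=> [C0 [h0 e0]] hlb hT; apply/eqP; rewrite eqn_leq; apply/andP; split.
  by rewrite /gammaLD -e0; apply: bigmin_le => //; rewrite mem_index_enum.
rewrite /gammaLD; apply: (big_ind (fun x => k <= x)) => //.
  by move=> x y hx hy; rewrite leq_min hx hy.
Qed.

Section Constr.
Variables (n m K : nat) (R Cl : nat -> nat).
Local Notation T := ('I_n.+1 * 'I_m.+1)%type.
Local Notation idx := (iota 0 K).
Definition noniso k := has (fun k' => (k' != k) && ((R k' == R k) || (Cl k' == Cl k))) idx.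
Definition lastused := has (fun k => R k == n) idx || has (fun k => Cl k == m) idx.

Hypothesis hb : all (fun k => (R k <= n) && (Cl k <= m)) idx.
Hypothesis hinj : all (fun k => all (fun k' => ((R k == R k') && (Cl k == Cl k')) ==> (k == k')) idx) idx.
Hypothesis hrow : all (fun i => has (fun k => R k == i) idx) (iota 0 n).
Hypothesis hcol : all (fun j => has (fun k => Cl k == j) idx) (iota 0 m).
Hypothesis hiso : all (fun k => noniso k || (lastused && all (fun k2 => (k2 == k) || noniso k2) idx)) idx.
Hypothesis hd : all (fun r => all (fun c => has (fun k => (R k == r) && (Cl k == c)) idx
                     || has (fun k => (R k != r) && (Cl k != c)) idx) (iota 0 m.+1)) (iota 0 n.+1).

Definition Ccode : {set T} := [set x : T | has (fun k => (R k == x.1) && (Cl k == x.2)) idx].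
Definition fk k : T := (inord (R k), inord (Cl k)).

Lemma hbP k : k < K -> R k <= n /\ Cl k <= m.
Proof. by move=> hk; move/allP: hb => /(_ k); rewrite mem_iota add0n hk => /(_ isT) /andP. Qed.

Lemma hinjP k k' : k < K -> k' < K -> R k = R k' -> Cl k = Cl k' -> k = k'.
Proof.
move=> hk hk' e1 e2; move/allP: hinj => /(_ k); rewrite mem_iota add0n hk => /(_ isT).
by move/allP => /(_ k'); rewrite mem_iota add0n hk' e1 e2 !eqxx => /(_ isT) /eqP.
Qed.

Lemma fk1 k : k < K -> val (fk k).1 = R k.
Proof. by move=> hk; rewrite /= inordK // ltnS; case: (hbP hk). Qed.
Lemma fk2 k : k < K -> val (fk k).2 = Cl k.
Proof. by move=> hk; rewrite /= inordK // ltnS; case: (hbP hk). Qed.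

Lemma fk_in k : k < K -> fk k \in Ccode.
Proof.
move=> hk; rewrite inE; apply/hasP; exists k; first by rewrite mem_iota add0n.
by rewrite fk1 // fk2 // !eqxx.
Qed.

Lemma memC x : x \in Ccode -> exists2 k, k < K & x = fk k.
Proof.
rewrite inE => /hasP [k]; rewrite mem_iota add0n => hk /andP [/eqP e1 /eqP e2].
exists k => //; case: x e1 e2 => x1 x2 /= e1 e2.
by congr pair; apply: val_inj; rewrite /= inordK // ?e1 ?e2 ltn_ord.
Qed.

Lemma fk_inj k k' : k < K -> k' < K -> fk k = fk k' -> k = k'.
Proof.
move=> hk hk' e; apply: hinjP => //.
  by rewrite -fk1 // -(fk1 hk') e.
by rewrite -fk2 // -(fk2 hk') e.
Qed.

Lemma card_Ccode : #|Ccode| = K.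
Proof.
have -> : Ccode = [set fk (val k) | k : 'I_K].
  apply/setP => x; apply/idP/imsetP.
    by case/memC => k hk ->; exists (Ordinal hk).
  by case=> k _ ->; exact: fk_in (ltn_ord k).
rewrite card_imset ?card_ord //.
by move=> a b /(fk_inj (ltn_ord a) (ltn_ord b)) /val_inj.
Qed.

Lemma row_emptyP r : row_empty Ccode r -> val r = n.
Proof.
move=> h; apply/eqP; rewrite eqn_leq -ltnS ltn_ord /= leqNgt; apply/negP => hr.
move/allP: hrow => /(_ r); rewrite mem_iota add0n hr => /(_ isT) /hasP [k].
rewrite mem_iota add0n => hk /eqP e.
move: (h (fk k).2); have -> : (r, (fk k).2) = fk k.
  by congr pair; apply: val_inj; rewrite fk1.
by rewrite fk_in.
Qed.

Lemma col_emptyP c : col_empty Ccode c -> val c = m.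
Proof.
move=> h; apply/eqP; rewrite eqn_leq -ltnS ltn_ord /= leqNgt; apply/negP => hr.
move/allP: hcol => /(_ c); rewrite mem_iota add0n hr => /(_ isT) /hasP [k].
rewrite mem_iota add0n => hk /eqP e.
move: (h (fk k).1); have -> : ((fk k).1, c) = fk k.
  by congr pair; apply: val_inj; rewrite fk2.
by rewrite fk_in.
Qed.

Lemma iso_noniso k : k < K -> isolated Ccode (fk k) -> ~~ noniso k.
Proof.
move=> hk [_ hi]; apply/negP => /hasP [k']; rewrite mem_iota add0n => hk' /andP [nk e].
have h' := hi _ (fk_in hk'); case/orP: e => /eqP e.
  have : fk k' = fk k by apply: h'; left; apply: val_inj; rewrite fk1 // fk1.
  by move/(fk_inj hk' hk) => ekk; rewrite ekk eqxx in nk.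
have : fk k' = fk k by apply: h'; right; apply: val_inj; rewrite fk2 // fk2.
by move/(fk_inj hk' hk) => ekk; rewrite ekk eqxx in nk.
Qed.

Lemma hisoP k : k < K -> noniso k || (lastused && all (fun k2 => (k2 == k) || noniso k2) idx).
Proof. by move=> hk; move/allP: hiso => /(_ k); rewrite mem_iota add0n hk => /(_ isT). Qed.

Lemma Ccode_LD : locating_dominating (KxK n.+1 m.+1) Ccode.
Proof.
apply: suffLD => //.
- by move=> r r' /row_emptyP h /row_emptyP h'; apply: val_inj; rewrite h h'.
- by move=> r r' /col_emptyP h /col_emptyP h'; apply: val_inj; rewrite h h'.
- move=> x y hx hy.
  case: (memC hx.1) => kx hkx ex; case: (memC hy.1) => ky hky ey.
  subst x y; have := hisoP hkx; rewrite (negbTE (iso_noniso hkx hx)) /= => /andP [_ /allP].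
  move=> /(_ ky); rewrite mem_iota add0n hky => /(_ isT).
  by rewrite (negbTE (iso_noniso hky hy)) orbF => /eqP ->.
- move=> x r c hx hr hc; have er := row_emptyP hr; have ec := col_emptyP hc.
  case: (memC hx.1) => kx hkx ex; subst x.
  have := hisoP hkx; rewrite (negbTE (iso_noniso hkx hx)) /= => /andP [/orP [] /hasP [k] + + _].
    rewrite mem_iota add0n => hk /eqP e.
    have : (r, (fk k).2) = fk k by congr pair; apply: val_inj; rewrite fk1 // e.
    by move=> ee; move: (hr (fk k).2); rewrite ee fk_in.
  rewrite mem_iota add0n => hk /eqP e.
  have : ((fk k).1, c) = fk k by congr pair; apply: val_inj; rewrite fk2 // e.
  by move=> ee; move: (hc (fk k).1); rewrite ee fk_in.
- move=> r c hrc.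
  move/allP: hd => /(_ r); rewrite mem_iota add0n ltn_ord => /(_ isT) /allP /(_ c).
  rewrite mem_iota add0n ltn_ord => /(_ isT) /orP [] /hasP [k]; rewrite mem_iota add0n => hk.
    move=> /andP [/eqP e1 /eqP e2].
    have : (r, c) = fk k by congr pair; apply: val_inj; rewrite ?fk1 ?fk2.
    by move=> ee; move: hrc; rewrite ee fk_in.
  move=> /andP [e1 e2]; exists (fk k); first exact: fk_in.
  by rewrite -!val_eqE fk1 // fk2 // e1 e2.
Qed.

End Constr.

Lemma small n m K (rl cl : seq nat) :
  let R := nth 0 rl in let Cl := nth 0 cl in
  [&& all (fun k => (R k <= n) && (Cl k <= m)) (iota 0 K),
   all (fun k => all (fun k' => ((R k == R k') && (Cl k == Cl k')) ==> (k == k')) (iota 0 K)) (iota 0 K),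
   all (fun i => has (fun k => R k == i) (iota 0 K)) (iota 0 n),
   all (fun j => has (fun k => Cl k == j) (iota 0 K)) (iota 0 m),
   all (fun k => noniso K R Cl k || (lastused n m K R Cl && all (fun k2 => (k2 == k) || noniso K R Cl k2) (iota 0 K))) (iota 0 K) &
   all (fun r => all (fun c => has (fun k => (R k == r) && (Cl k == c)) (iota 0 K)
                     || has (fun k => (R k != r) && (Cl k != c)) (iota 0 K)) (iota 0 m.+1)) (iota 0 n.+1)] ->
  exists C : {set 'I_n.+1 * 'I_m.+1}, locating_dominating (KxK n.+1 m.+1) C /\ #|C| = K.
Proof.
move=> R Cl /and5P [h1 h2 h3 h4 /andP [h5 h6]].
by exists (@Ccode n m K R Cl); split; [apply: Ccode_LD | apply: card_Ccode].
Qed.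

Lemma s22 : exists C : {set 'I_2 * 'I_2}, locating_dominating (KxK 2 2) C /\ #|C| = 2.
Proof. by apply: (@small 1 1 2 [::0;0] [::0;1]); vm_compute. Qed.
Lemma s23 : exists C : {set 'I_2 * 'I_3}, locating_dominating (KxK 2 3) C /\ #|C| = 3.
Proof. by apply: (@small 1 2 3 [::0;0;1] [::0;1;0]); vm_compute. Qed.
Lemma s24 : exists C : {set 'I_2 * 'I_4}, locating_dominating (KxK 2 4) C /\ #|C| = 4.
Proof. by apply: (@small 1 3 4 [::0;0;1;1] [::0;1;2;3]); vm_compute. Qed.
Lemma s33 : exists C : {set 'I_3 * 'I_3}, locating_dominating (KxK 3 3) C /\ #|C| = 3.
Proof. by apply: (@small 2 2 3 [::0;0;1] [::0;1;0]); vm_compute. Qed.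
Lemma s34 : exists C : {set 'I_3 * 'I_4}, locating_dominating (KxK 3 4) C /\ #|C| = 4.
Proof. by apply: (@small 2 3 4 [::0;0;1;1] [::0;1;2;3]); vm_compute. Qed.
Lemma s35 : exists C : {set 'I_3 * 'I_5}, locating_dominating (KxK 3 5) C /\ #|C| = 4.
Proof. by apply: (@small 2 4 4 [::0;0;1;1] [::0;1;2;3]); vm_compute. Qed.
Lemma s44 : exists C : {set 'I_4 * 'I_4}, locating_dominating (KxK 4 4) C /\ #|C| = 5.
Proof. by apply: (@small 3 3 5 [::0;0;1;1;2] [::0;1;2;3;0]); vm_compute. Qed.

Definition Rf a b k :=
  if k < a then k else if k < 2 * a then k - a else if k < 2 * a + b then a + 2 * (k - 2 * a)
  else if k < 2 * a + 2 * b then a + 2 * (k - 2 * a - b) + 1 else a + 2 * b.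
Definition Cf a b k :=
  if k < a then 2 * k else if k < 2 * a then 2 * (k - a) + 1 else if k < 2 * a + b then 2 * a + (k - 2 * a)
  else if k < 2 * a + 2 * b then 2 * a + (k - 2 * a - b) else 2 * a + b + (k - 2 * a - 2 * b).

Ltac splitRC := rewrite /Rf /Cf; repeat (case: ifP => ?).

Section Fam.
Variables n m a b w : nat.
Local Notation K := (2 * a + 2 * b + w).
Local Notation R := (Rf a b).
Local Notation Cl := (Cf a b).
Hypothesis hr1 : a + 2 * b + minn w 1 <= n.+1.
Hypothesis hr2 : n <= a + 2 * b + minn w 1.
Hypothesis hc1 : 2 * a + b + w <= m.+1.
Hypothesis hc2 : m <= 2 * a + b + w.
Hypothesis hw : w = 1 -> a + 2 * b + 1 = n.+1 \/ 2 * a + b + 1 = m.+1.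
Hypothesis hblk : 3 <= a + b + minn w 1 \/ (a = 1 /\ b = 0 /\ 2 <= w).

Lemma inI k : (k \in iota 0 K) = (k < K).
Proof. by rewrite mem_iota add0n. Qed.

Lemma f_hb : all (fun k => (R k <= n) && (Cl k <= m)) (iota 0 K).
Proof. apply/allP => k; rewrite inI => hk; apply/andP; split; splitRC; lia. Qed.

Lemma f_hinj : all (fun k => all (fun k' => ((R k == R k') && (Cl k == Cl k')) ==> (k == k')) (iota 0 K)) (iota 0 K).
Proof.
apply/allP => k; rewrite inI => hk; apply/allP => k'; rewrite inI => hk'.
apply/implyP => /andP [/eqP + /eqP]; move=> e1 e2; apply/eqP; move: e1 e2; splitRC; lia.
Qed.

Lemma f_hrow : all (fun i => has (fun k => R k == i) (iota 0 K)) (iota 0 n).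
Proof.
apply/allP => i; rewrite mem_iota add0n => hi; apply/hasP.
exists (if i < a then i else if i < a + 2 * b then
          (if (i - a) %% 2 == 0 then 2 * a + (i - a) %/ 2 else 2 * a + b + (i - a) %/ 2)
        else 2 * a + 2 * b).
  rewrite inI; repeat (case: ifP => ?); lia.
apply/eqP; repeat (case: ifP => ?); splitRC; lia.
Qed.

Lemma f_hcol : all (fun j => has (fun k => Cl k == j) (iota 0 K)) (iota 0 m).
Proof.
apply/allP => j; rewrite mem_iota add0n => hj; apply/hasP.
exists (if j < 2 * a then (if j %% 2 == 0 then j %/ 2 else a + j %/ 2)
        else if j < 2 * a + b then 2 * a + 2 * (j - 2 * a) - (j - 2 * a)
        else 2 * a + 2 * b + (j - 2 * a - b)).
  rewrite inI; repeat (case: ifP => ?); lia.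
apply/eqP; repeat (case: ifP => ?); splitRC; lia.
Qed.

Lemma nonisoP k : k < K -> ~ (w = 1 /\ k = 2 * a + 2 * b) -> noniso K R Cl k.
Proof.
move=> hk hn; apply/hasP.
exists (if k < a then k + a else if k < 2 * a then k - a else if k < 2 * a + b then k + b
        else if k < 2 * a + 2 * b then k - b else if k == 2 * a + 2 * b then k + 1 else 2 * a + 2 * b).
  rewrite inI; repeat (case: ifP => ?); lia.
have H : (let p := (if k < a then k + a else if k < 2 * a then k - a else if k < 2 * a + b then k + b
        else if k < 2 * a + 2 * b then k - b else if k == 2 * a + 2 * b then k + 1 else 2 * a + 2 * b) in
        p <> k /\ (R p = R k \/ Cl p = Cl k)).
  rewrite /=; repeat (case: ifP => ?); splitRC; lia.
move: H => /= [/eqP -> [] /eqP ->]; by rewrite ?orbT.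
Qed.

Lemma f_hiso : all (fun k => noniso K R Cl k || (lastused n m K R Cl &&
   all (fun k2 => (k2 == k) || noniso K R Cl k2) (iota 0 K))) (iota 0 K).
Proof.
apply/allP => k; rewrite inI => hk.
case: (boolP ((w == 1) && (k == 2 * a + 2 * b))) => [/andP [/eqP w1 /eqP ek]|hn].
  apply/orP; right; apply/andP; split.
    case: (hw w1) => h; apply/orP; [left|right]; apply/hasP; exists (2 * a + 2 * b);
      rewrite ?inI; try lia; apply/eqP; splitRC; lia.
  apply/allP => k2; rewrite inI => hk2; case: (eqVneq k2 k) => //= nk.
  apply: nonisoP => // -[_ e]; move: nk; rewrite e ek eqxx //.
apply/orP; left; apply: nonisoP => // -[/eqP w1 /eqP ek]; by rewrite w1 ek in hn.
Qed.

Lemma f_hd : all (fun r => all (fun c => has (fun k => (R k == r) && (Cl k == c)) (iota 0 K)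
                     || has (fun k => (R k != r) && (Cl k != c)) (iota 0 K)) (iota 0 m.+1)) (iota 0 n.+1).
Proof.
apply/allP => r _; apply/allP => c _; apply/orP; right; apply/hasP.
case: hblk => [h3|[ea [eb ew]]].
  pose rp B := if B < a then B else if B < a + b then 2 * a + (B - a) else 2 * a + 2 * b.
  have hrp : forall B, B < 3 -> rp B < K by move=> B hB; rewrite /rp; repeat (case: ifP => ?); lia.
  have hR : forall B B', B < 3 -> B' < 3 -> B != B' -> (R (rp B) != R (rp B')) && (Cl (rp B) != Cl (rp B')).
    move=> B B' hB hB' nB; apply/andP; split; apply/negP => /eqP; move: nB => /eqP nB;
      rewrite /rp; repeat (case: ifP => ?); splitRC; lia.
  have := hR 0 1 isT isT isT; have := hR 0 2 isT isT isT; have := hR 1 2 isT isT isT.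
  move=> /andP [/eqP a1 /eqP a2] /andP [/eqP a3 /eqP a4] /andP [/eqP a5 /eqP a6].
  have : (R (rp 0) <> r /\ Cl (rp 0) <> c) \/ (R (rp 1) <> r /\ Cl (rp 1) <> c) \/
         (R (rp 2) <> r /\ Cl (rp 2) <> c) by lia.
  case=> [[/eqP h1 /eqP h2]|[[/eqP h1 /eqP h2]|[/eqP h1 /eqP h2]]];
    [exists (rp 0)|exists (rp 1)|exists (rp 2)]; rewrite ?inI ?hrp ?h1 ?h2 //.
exists (if r == 0 then (if c == 2 then 3 else 2) else (if c == 0 then 1 else 0)).
  rewrite inI; repeat (case: ifP => ?); lia.
apply/andP; split; apply/negP => /eqP; repeat (case: ifP => /eqP ?); splitRC; lia.
Qed.

End Fam.

Lemma fam_constr n m a b w :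
  a + 2 * b + minn w 1 <= n.+1 -> n <= a + 2 * b + minn w 1 ->
  2 * a + b + w <= m.+1 -> m <= 2 * a + b + w ->
  (w = 1 -> a + 2 * b + 1 = n.+1 \/ 2 * a + b + 1 = m.+1) ->
  (3 <= a + b + minn w 1 \/ (a = 1 /\ b = 0 /\ 2 <= w)) ->
  exists C : {set 'I_n.+1 * 'I_m.+1}, locating_dominating (KxK n.+1 m.+1) C /\ #|C| = 2 * a + 2 * b + w.
Proof.
move=> h1 h2 h3 h4 h5 h6.
exists (@Ccode n m (2 * a + 2 * b + w) (Rf a b) (Cf a b)); split; [apply: Ccode_LD|apply: card_Ccode];
  first [exact: (f_hb h1 h2 h3 h4 h5 h6) | exact: (f_hinj h1 h2 h3 h4 h5 h6) | exact: (f_hrow h1 h2 h3 h4 h5 h6)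
        | exact: (f_hcol h1 h2 h3 h4 h5 h6) | exact: (f_hiso h1 h2 h3 h4 h5 h6) | exact: (f_hd h1 h2 h3 h4 h5 h6)].
Qed.

Lemma gLD n m k : (exists C : {set 'I_n * 'I_m}, locating_dominating (KxK n m) C /\ #|C| = k) ->
  (forall C : {set 'I_n * 'I_m}, locating_dominating (KxK n m) C -> k <= #|C|) ->
  gammaLD (KxK n m) = k.
Proof.
move=> [C [h e]] hl; apply: gammaLD_eq => //; first by exists C.
by rewrite -e max_card.
Qed.

Unset Implicit Arguments.

Theorem theorem15 (n m : nat) :
  (2 <= n)%N -> (n <= m)%N ->
  (((2 * n <= m)%N /\ ~ (n = 2 /\ m = 4) -> gammaLD (KxK n m) = (m - 1)%N) /\
  ((2 < n)%N /\ (m < 2 * n)%N /\ ~ (n = 4 /\ m = 4) ->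
     gammaLD (KxK n m) = ((2 * n + 2 * m - 1 + 2) %/ 3 - 1)%N) /\
  (n = 2 /\ (m <= 4)%N -> gammaLD (KxK n m) = m) /\
  (n = 4 /\ m = 4 -> gammaLD (KxK n m) = 5)).
Proof.
case: n => [|n] // h2n; case: m => [|m] hnm //.
have n0 : 0 < n.+1 by [].
have m0 : 0 < m.+1 by [].
have LB1 : forall C, locating_dominating (KxK n.+1 m.+1) C -> m <= #|C|.
  by move=> C hC; have := lb_m1 n0 m0 hC; abs_cards; lia.
have LB2 : forall C, locating_dominating (KxK n.+1 m.+1) C -> 2 * n.+1 + 2 * m.+1 <= 3 * #|C| + 4.
  by move=> C hC; apply: lb_main n0 m0 hC.
split; [|split; [|split]].
- move=> [h1 h2]; rewrite subn1 /=; apply: gLD; last exact: LB1.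
  have [C [hC eC]] := @fam_constr n m n 0 (m.+1 - 2 * n.+1 + 1) ltac:(lia) ltac:(lia) ltac:(lia) ltac:(lia) ltac:(lia) ltac:(lia).
  by exists C; split => //; rewrite eC; lia.
- move=> [h1 [h2 h3]]; apply: gLD.
  + case: (boolP ((n == 2) && (m <= 4))) => [/andP [/eqP en hm]|hns].
      subst n; case: m hm h1 h2 h3 hnm {LB1 LB2 m0} => [|[|[|[|[|m]]]]] //= _ _ _ h3 _.
      * exact: s33.
      * exact: s34.
      * exact: s35.
    have hns' : ~ (n = 2 /\ m <= 4) by move=> [/eqP e1 e2]; rewrite e1 e2 in hns.
    have hr : (n.+1 + m.+1) %% 3 < 3 by rewrite ltn_mod.
    case E: ((n.+1 + m.+1) %% 3) hr => [|[|[|?]]] // _.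
    * have [C [hC eC]] := @fam_constr n m ((2 * m.+1 - n.+1 - 3) %/ 3) ((2 * n.+1 - m.+1) %/ 3) 1
        ltac:(lia) ltac:(lia) ltac:(lia) ltac:(lia) ltac:(lia) ltac:(lia).
      by exists C; split => //; rewrite eC; lia.
    * have [C [hC eC]] := @fam_constr n m ((2 * m.+1 - 2 - n.+1) %/ 3) ((2 * n.+1 - m.+1 + 1) %/ 3) 0
        ltac:(lia) ltac:(lia) ltac:(lia) ltac:(lia) ltac:(lia) ltac:(lia).
      by exists C; split => //; rewrite eC; lia.
    * have [C [hC eC]] := @fam_constr n m ((2 * m.+1 - n.+1 - 1) %/ 3) ((2 * n.+1 - m.+1 - 1) %/ 3) 0
        ltac:(lia) ltac:(lia) ltac:(lia) ltac:(lia) ltac:(lia) ltac:(lia).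
      by exists C; split => //; rewrite eC; lia.
  + move=> C hC; have := LB2 _ hC; abs_cards; lia.
- move=> [h1 h2]; apply: gLD.
  + have e : n = 1 by lia.
    subst n; case: m h2 hnm {LB1 LB2 m0} => [|[|[|[|m]]]] // _ _; [exact: s22 | exact: s23 | exact: s24].
  + move=> C hC; have e : n = 1 by lia.
    subst n; have := LB1 _ hC => hl.
    case: (ltnP #|C| m.+1) => // hlt.
    case: (ltnP #|C| 4) => hl4; last by lia.
    by case: (lbn2 m0 hC hlt hl4).
- move=> [h1 h2]; have e1 : n = 3 by lia. have e2 : m = 3 by lia. subst n m.
  apply: gLD; first exact: s44.
  move=> C hC; case: (ltnP 4 #|C|) => // h.
  by case: (lb44 n0 m0 hC erefl erefl h).
Qed.
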